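(* Let $q$ be a prime power and $n\ge1$. For $1\le i,k\le n$, \[ Q^{(n)}_k(i)=Q^{(n)}_k(i-1)+(-q)^{2n-i}\,Q^{(n-1)}_{k-1}(i-1). \]
   Context: For $m\ge0$ let $X(m)$ be the set of $m\times m$ Hermitian matrices over $\mathbb{F}_{q^2}$, i.e. matrices $A$ with $A^*=A$, where $A^*$ is the transpose of the matrix obtained by applying $x\mapsto x^q$ to each entry (for $m=0$, $X(0)$ consists of the single empty matrix, of rank $0$). Fix a nontrivial character $\chi$ of $(\mathbb{F}_q,+)$ and for $A,B\in X(m)$ put $\langle A,B\rangle=\chi(\operatorname{tr}(A^*B))$. Let $X_k(m)$ be the set of matrices in $X(m)$ of rank $k$. For $0\le i,k\le m$, $Q^{(m)}_k(i)=\sum_{A\in X_k(m)}\langle A,B\rangle$, where $B$ is any element of $X_i(m)$ (this value does not depend on the choice of $B$). *)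

(* Defs.v *)
From HB Require Import structures.
From mathcomp Require Import all_boot all_order all_algebra.
From mathcomp Require Import algC.
Set Implicit Arguments. Unset Strict Implicit. Unset Printing Implicit Defensive.
Import GRing.Theory Num.Theory.
Local Open Scope ring_scope.

(* F plays the role of F_{q^2}; conjugation is x |-> x^q. *)
Definition conjq (F : finFieldType) (q : nat) (x : F) : F := x ^+ q.

Definition hadj (F : finFieldType) (q m : nat) (A : 'M[F]_m) : 'M[F]_m :=
  (map_mx (conjq q) A)^T.

Definition herm_mx (F : finFieldType) (q m : nat) (A : 'M[F]_m) : bool :=
  hadj q A == A.

(* chi is an additive character of F_q = {x in F | x^q = x}, valued in algC
   (its values outside F_q are irrelevant). *)
Definition is_Fq_character (F : finFieldType) (q : nat) (chi : F -> algC) : Prop :=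
  chi 0 = 1 /\
  forall x y : F, x ^+ q = x -> y ^+ q = y -> chi (x + y) = chi x * chi y.

Definition Fq_nontrivial (F : finFieldType) (q : nat) (chi : F -> algC) : Prop :=
  exists x : F, x ^+ q = x /\ chi x != 1.

(* Q^{(m)}_k evaluated at the Hermitian matrix B (its value depends only on rank B). *)
Definition Qval (F : finFieldType) (q : nat) (chi : F -> algC) (m k : nat)
  (B : 'M[F]_m) : algC :=
  \sum_(A : 'M[F]_m | herm_mx q A && (\rank A == k)) chi (\tr (hadj q A *m B)).

(* Main.v *)
Require Import Defs.
From HB Require Import structures.
From mathcomp Require Import all_boot all_order all_algebra all_field.
From mathcomp Require Import algC zify ring.
Import GRing.Theory Num.Theory.
Local Open Scope ring_scope.
Set Implicit Arguments. Unset Strict Implicit. Unset Printing Implicit Defensive.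

Section Main.
Variable F : finFieldType.
Variable q : nat.
Hypothesis q_gt1 : (1 < q)%N.
Hypothesis cardF : #|F| = (q ^ 2)%N.
Hypothesis cjD : forall x y : F, (x + y) ^+ q = x ^+ q + y ^+ q.

Local Notation cj := (@conjq F q).

Lemma cjE x : cj x = x ^+ q. Proof. by []. Qed.
Lemma cj0 : cj 0 = 0. Proof. by rewrite cjE expr0n; case: q q_gt1. Qed.
Lemma cj1 : cj 1 = 1. Proof. by rewrite cjE expr1n. Qed.
Lemma cjDr x y : cj (x + y) = cj x + cj y. Proof. exact: cjD. Qed.
Lemma cjMr x y : cj (x * y) = cj x * cj y. Proof. by rewrite !cjE exprMn. Qed.
Lemma cjNr x : cj (- x) = - cj x.
Proof. by apply/eqP; rewrite -subr_eq0 opprK -cjDr addNr cj0. Qed.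
Lemma cjK x : cj (cj x) = x.
Proof. by rewrite !cjE -exprM -{2}(expf_card x) cardF -mulnn. Qed.
Lemma cj_inj : injective cj. Proof. exact: can_inj cjK. Qed.
Lemma cj_eq0 x : (cj x == 0) = (x == 0).
Proof. by rewrite -{1}cj0 (inj_eq cj_inj). Qed.
Lemma cjVr x : cj (x^-1) = (cj x)^-1. Proof. by rewrite cjE exprVn. Qed.
Lemma cj_sum I (r : seq I) (P : pred I) (f : I -> F) :
  cj (\sum_(i <- r | P i) f i) = \sum_(i <- r | P i) cj (f i).
Proof. exact: (big_morph _ cjDr cj0). Qed.

Definition adjm m n (A : 'M[F]_(m, n)) : 'M[F]_(n, m) := (map_mx cj A)^T.
Lemma adjmE m n (A : 'M[F]_(m, n)) (i : 'I_n) (j : 'I_m) : adjm A i j = cj (A j i).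
Proof. by rewrite !mxE. Qed.
Lemma hadjE m (A : 'M[F]_m) : hadj q A = adjm A. Proof. by []. Qed.
Lemma adjmK m n (A : 'M[F]_(m, n)) : adjm (adjm A) = A.
Proof. by apply/matrixP => i j; rewrite !adjmE cjK. Qed.
Lemma adjmD m n (A B : 'M[F]_(m, n)) : adjm (A + B) = adjm A + adjm B.
Proof. by apply/matrixP => i j; rewrite !mxE cjDr. Qed.
Lemma adjmN m n (A : 'M[F]_(m, n)) : adjm (- A) = - adjm A.
Proof. by apply/matrixP => i j; rewrite !mxE cjNr. Qed.
Lemma adjm0 m n : adjm (0 : 'M[F]_(m, n)) = 0.
Proof. by apply/matrixP => i j; rewrite !mxE cj0. Qed.
Lemma adjmM m n p (A : 'M[F]_(m, n)) (B : 'M[F]_(n, p)) :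
  adjm (A *m B) = adjm B *m adjm A.
Proof.
apply/matrixP => i j; rewrite !mxE cj_sum; apply: eq_bigr => k _.
by rewrite !mxE cjMr mulrC.
Qed.
Lemma adjm_scalar m (a : F) : adjm (a%:M : 'M_m) = (cj a)%:M.
Proof.
by apply/matrixP => i j; rewrite !mxE eq_sym; case: (i == j); rewrite ?cj0.
Qed.
Lemma adjmZ m n a (A : 'M[F]_(m, n)) : adjm (a *: A) = cj a *: adjm A.
Proof. by apply/matrixP => i j; rewrite !mxE cjMr. Qed.
Lemma adjm_block m1 m2 n1 n2 (A : 'M[F]_(m1, n1)) (B : 'M[F]_(m1, n2))
  (C : 'M[F]_(m2, n1)) (D : 'M[F]_(m2, n2)) :
  adjm (block_mx A B C D) = block_mx (adjm A) (adjm C) (adjm B) (adjm D).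
Proof. by rewrite /adjm map_block_mx tr_block_mx. Qed.
Lemma adjm_col m1 m2 n (A : 'M[F]_(m1, n)) (B : 'M[F]_(m2, n)) :
  adjm (col_mx A B) = row_mx (adjm A) (adjm B).
Proof. by rewrite /adjm map_col_mx tr_col_mx. Qed.
Lemma adjm_row m n1 n2 (A : 'M[F]_(m, n1)) (B : 'M[F]_(m, n2)) :
  adjm (row_mx A B) = col_mx (adjm A) (adjm B).
Proof. by rewrite /adjm map_row_mx tr_row_mx. Qed.

Lemma cj_tr m (A : 'M[F]_m) : cj (\tr A) = \tr (adjm A).
Proof. by rewrite /mxtrace cj_sum; apply: eq_bigr => i _; rewrite adjmE. Qed.

Definition herm m (A : 'M[F]_m) := adjm A == A.
Lemma hermE m (A : 'M[F]_m) : herm_mx q A = herm A. Proof. by []. Qed.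

Lemma tr_herm m (X Y : 'M[F]_m) : herm X -> herm Y ->
  cj (\tr (X *m Y)) = \tr (X *m Y).
Proof.
move=> /eqP hX /eqP hY; rewrite cj_tr adjmM hX hY mxtrace_mulC //.
Qed.

Lemma herm_block m1 m2 (A : 'M[F]_m1) (B : 'M[F]_(m1, m2)) (C : 'M[F]_(m2, m1))
  (D : 'M[F]_m2) :
  herm (block_mx A B C D) = [&& herm A, adjm C == B & herm D].
Proof.
rewrite /herm adjm_block; apply/eqP/and3P.
  move/eq_block_mx => [-> h1 h2 ->]; split => //; by rewrite h1.
move=> [/eqP -> /eqP <- /eqP ->]; by rewrite adjmK.
Qed.

Lemma herm_adjm_conj m n (P : 'M[F]_(m, n)) (B : 'M[F]_m) :
  herm B -> herm (adjm P *m B *m P).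
Proof. by move=> /eqP hB; rewrite /herm !adjmM adjmK hB mulmxA. Qed.


Definition inFq (x : F) := cj x == x.
Lemma inFq0 : inFq 0. Proof. by rewrite /inFq cj0. Qed.

Lemma card_roots_lt (p : {poly F}) : p != 0 -> (#|[pred x | root p x]| < size p)%N.
Proof.
move=> p0; rewrite cardE; apply: (max_poly_roots p0 _ (enum_uniq _)).
by apply/allP => x; rewrite mem_enum.
Qed.

Lemma card_Fq_le : (#|[pred x | inFq x]| <= q)%N.
Proof.
have q0 : (0 < q)%N by apply: ltnW.
have sz : size ('X^q - 'X : {poly F}) = q.+1.
  rewrite size_addl ?size_polyXn // size_polyN size_polyX; by [].
have nz : ('X^q - 'X : {poly F}) != 0 by rewrite -size_poly_gt0 sz.
have := card_roots_lt nz; rewrite sz ltnS; apply: leq_trans.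
apply: subset_leq_card; apply/subsetP => x; rewrite !inE /inFq /root !hornerE.
by rewrite subr_eq0.
Qed.

Definition nrm (z : F) := z ^+ q.+1.
Lemma nrmE z : nrm z = cj z * z. Proof. by rewrite /nrm exprS mulrC. Qed.
Lemma nrm_Fq z : inFq (nrm z).
Proof. by rewrite /inFq !nrmE cjMr cjK mulrC. Qed.

Lemma card_fib_le t : (#|[pred z | nrm z == t]| <= q.+1)%N.
Proof.
have sz : size ('X^(q.+1) - t%:P : {poly F}) = q.+2 by rewrite size_XnsubC.
have nz : ('X^(q.+1) - t%:P : {poly F}) != 0 by rewrite -size_poly_gt0 sz.
have := card_roots_lt nz; rewrite sz ltnS; apply: leq_trans.
apply: subset_leq_card; apply/subsetP => x; rewrite !inE /root !hornerE.
by rewrite subr_eq0.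
Qed.

Lemma card_fib0 : #|[pred z | nrm z == 0]| = 1%N.
Proof.
rewrite -(card1 (0 : F)). apply: eq_card => z /=; by rewrite !inE /nrm expf_eq0.
Qed.

Lemma count_facts : #|[pred x | inFq x]| = q /\
  forall t, inFq t -> t != 0 -> #|[pred z | nrm z == t]| = q.+1.
Proof.
set k := #|[pred x | inFq x]|.
set fib := fun t => #|[pred z | nrm z == t]|.
have tot : (q ^ 2 = \sum_(t | inFq t) fib t)%N.
  rewrite -cardF -sum1_card (partition_big nrm inFq) /=; last by move=> z _; apply: nrm_Fq.
  by apply: eq_bigr => t _; rewrite sum1_card.
rewrite (bigD1 0) /= ?inFq0 // {1}/fib card_fib0 in tot.
have kpos : (0 < k)%N by apply/card_gt0P; exists 0; rewrite inE inFq0.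
have cardD : #|[pred t | inFq t && (t != 0)]| = k.-1.
  rewrite /k [in RHS](cardD1 0) inE inFq0 /=; apply: eq_card => t; rewrite !inE andbC //.
have le1 := leqif_sum (P := fun t => inFq t && (t != 0)) (C := fun t => fib t == q.+1)
  (E1 := fib) (E2 := fun _ => q.+1) (fun t _ => leqif_eq (card_fib_le t)).
rewrite sum_nat_const cardD in le1.
have kq := card_Fq_le; rewrite -/k in kq.
move: le1 tot; set S := \sum_(i | _) fib i => le1 tot.
have [leS _] := le1.
have [kq' eqs] : k = q /\ S = (k.-1 * q.+1)%N.
  clear cardD le1; move: kpos kq leS tot; case: k => // k1 _ /= kq leS tot.
  have e1 : k1.+1 = q by nia.
  split => //; nia.
split => //.
move=> t tq t0.
case: le1 => _; rewrite eqs eqxx => /esym/forall_inP H; apply/eqP; apply: H; by rewrite tq.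
Qed.

Lemma inFqD x y : inFq x -> inFq y -> inFq (x + y).
Proof. by rewrite /inFq cjDr => /eqP -> /eqP ->. Qed.
Lemma inFqM x y : inFq x -> inFq y -> inFq (x * y).
Proof. by rewrite /inFq cjMr => /eqP -> /eqP ->. Qed.
Lemma inFqN x : inFq x -> inFq (- x).
Proof. by rewrite /inFq cjNr => /eqP ->. Qed.
Lemma inFqV x : inFq x -> inFq (x^-1).
Proof. by rewrite /inFq cjVr => /eqP ->. Qed.
Lemma inFq1 : inFq 1. Proof. by rewrite /inFq cj1. Qed.

Variable chi : F -> algC.
Hypothesis chi0 : chi 0 = 1.
Hypothesis chiD : forall x y : F, x ^+ q = x -> y ^+ q = y -> chi (x + y) = chi x * chi y.
Hypothesis chi_nt : exists x : F, x ^+ q = x /\ chi x != 1.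

Lemma chiDF x y : inFq x -> inFq y -> chi (x + y) = chi x * chi y.
Proof. by move=> /eqP hx /eqP hy; apply: chiD. Qed.

Lemma chi_sum0 : \sum_(t | inFq t) chi t = 0.
Proof.
have [x0 [/eqP hx0 cx0]] := chi_nt.
set S := \sum_(t | _) _.
have e1 : S = \sum_(t | inFq t) chi (t + x0).
  rewrite /S (reindex_inj (addIr x0)) /=.
  apply: eq_bigl => t; apply/idP/idP => h; first by rewrite -(addrK x0 t); apply: inFqD => //; apply: inFqN.
  by apply: inFqD.
have : S = S * chi x0.
  rewrite {1}e1 /S mulr_suml; apply: eq_bigr => t ht; by rewrite chiDF.
move/eqP; rewrite -subr_eq0 -{1}(mulr1 S) -mulrBr mulf_eq0 subr_eq0 eq_sym.
by move=> /orP [/eqP <- // | /eqP h]; rewrite h eqxx in cx0.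
Qed.

Lemma chi_sumM e : inFq e -> e != 0 -> \sum_(t | inFq t) chi (e * t) = 0.
Proof.
move=> he e0; transitivity (\sum_(t | inFq t) chi t); last exact: chi_sum0.
rewrite [RHS](reindex_inj (mulfI e0)) /=.
apply: eq_bigl => t; apply/idP/idP => h; first by apply: inFqM.
by rewrite -(mulKf e0 t); apply: inFqM => //; apply: inFqV.
Qed.

Lemma chi_sumM1 e : inFq e -> e != 0 ->
  \sum_(t | inFq t && (t != 0)) chi (e * t) = -1.
Proof.
move=> he e0.
have := chi_sumM he e0; rewrite (bigD1 0) ?inFq0 //= mulr0 chi0.
by move/eqP; rewrite addrC addr_eq0 => /eqP.
Qed.

Lemma sum_Fq_nz1 : \sum_(t | inFq t && (t != 0)) (1 : algC) = (q.-1)%:R.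
Proof.
rewrite sumr_const; congr (_ *+ _).
have [kq _] := count_facts.
rewrite -kq [in RHS](cardD1 0) inE inFq0 /=; apply: eq_card => t; rewrite !inE andbC //.
Qed.

Lemma sumr_const' (I : finType) (A : pred I) (c : algC) :
  \sum_(i | A i) c = c *+ #|A|.
Proof. exact: sumr_const. Qed.

Lemma gauss1 e : inFq e -> e != 0 -> \sum_(z : F) chi (e * nrm z) = - (q%:R).
Proof.
move=> he e0.
rewrite (partition_big nrm inFq) /=; last by move=> z _; apply: nrm_Fq.
rewrite (bigD1 0) ?inFq0 //=.
have [_ hfib] := count_facts.
have -> : \sum_(z | nrm z == 0) chi (e * nrm z) = 1.
  rewrite (eq_bigr (fun _ => 1)); last by move=> z /eqP ->; rewrite mulr0 chi0.
  by rewrite sumr_const' card_fib0.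
rewrite (eq_bigr (fun t => q.+1%:R * chi (e * t))); last first.
  move=> t /andP [tq t0].
  rewrite (eq_bigr (fun _ => chi (e * t))); last by move=> z /eqP ->.
  rewrite sumr_const' -(hfib t tq t0) mulr_natl; congr (_ *+ _); by apply: eq_card.
by rewrite -mulr_sumr chi_sumM1 // mulrN1 mulrS opprD addrA subrr add0r.
Qed.

Lemma adjm1 m : adjm (1%:M : 'M[F]_m) = 1%:M.
Proof. by rewrite adjm_scalar cj1. Qed.

Lemma adjm_unit m (P : 'M[F]_m) : P \in unitmx -> adjm P \in unitmx.
Proof.
move=> hP; have h : adjm P *m adjm (invmx P) = 1%:M by rewrite -adjmM mulVmx // adjm1.
by case: (mulmx1_unit h).
Qed.

Lemma rank_unitr m n (A : 'M[F]_(m, n)) (P : 'M[F]_n) : P \in unitmx ->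
  \rank (A *m P) = \rank A.
Proof. by move=> hP; rewrite mxrankMfree // row_free_unit. Qed.

Lemma rank_unitl m n (A : 'M[F]_(m, n)) (P : 'M[F]_m) : P \in unitmx ->
  \rank (P *m A) = \rank A.
Proof.
by move=> hP; rewrite -mxrank_tr trmx_mul rank_unitr ?mxrank_tr ?unitmx_tr.
Qed.

Lemma rank_cong m (A P : 'M[F]_m) : P \in unitmx ->
  \rank (adjm P *m A *m P) = \rank A.
Proof. by move=> hP; rewrite rank_unitr // rank_unitl // adjm_unit. Qed.

Lemma rank_scalar1 (d : F) : \rank (d%:M : 'M[F]_1) = (d != 0).
Proof.
rewrite rank_rV; have -> : (d%:M == 0 :> 'M[F]_1) = (d == 0); last by [].
apply/eqP/eqP => [/matrixP/(_ 0 0)|->].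
  by rewrite !mxE.
by apply/matrixP => i j; rewrite !mxE mul0rn.
Qed.

Lemma herm_scalar m d : inFq d -> herm (d%:M : 'M[F]_m).
Proof. by move=> /eqP hd; rewrite /herm adjm_scalar hd. Qed.

Lemma hermD m (A B : 'M[F]_m) : herm A -> herm B -> herm (A + B).
Proof. by move=> /eqP hA /eqP hB; rewrite /herm adjmD hA hB. Qed.
Lemma hermN m (A : 'M[F]_m) : herm A -> herm (- A).
Proof. by move=> /eqP hA; rewrite /herm adjmN hA. Qed.
Lemma hermZ m d (A : 'M[F]_m) : inFq d -> herm A -> herm (d *: A).
Proof. by move=> /eqP hd /eqP hA; rewrite /herm adjmZ hd hA. Qed.
Lemma herm_xx m (x : 'M[F]_(m, 1)) : herm (x *m adjm x).
Proof. by rewrite /herm adjmM adjmK. Qed.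
Lemma herm0 m : herm (0 : 'M[F]_m). Proof. by rewrite /herm adjm0. Qed.

Lemma tr_Fq m (X Y : 'M[F]_m) : herm X -> herm Y -> inFq (\tr (X *m Y)).
Proof. by move=> hX hY; rewrite /inFq tr_herm. Qed.

Definition QP m (P : pred nat) (B : 'M[F]_m) : algC :=
  \sum_(A : 'M[F]_m | herm A && P (\rank A)) chi (\tr (adjm A *m B)).

Lemma QPE m P (B : 'M[F]_m) :
  QP P B = \sum_(A : 'M[F]_m | herm A && P (\rank A)) chi (\tr (A *m B)).
Proof. by apply: eq_bigr => A /andP [/eqP -> _]. Qed.

Lemma QP_cong m P (B Pm : 'M[F]_m) : Pm \in unitmx ->
  QP P (adjm Pm *m B *m Pm) = QP P B.
Proof.
move=> hP; rewrite !QPE.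
have hPa := adjm_unit hP.
pose h (A : 'M[F]_m) := Pm *m A *m adjm Pm.
have hinj : injective h.
  move=> A A' /(congr1 (fun X => invmx Pm *m X *m invmx (adjm Pm))).
  by rewrite /h !mulmxA !mulVmx // !mul1mx -!mulmxA !mulmxV // !mulmx1.
rewrite [RHS](reindex_inj hinj) /=; apply: eq_big => A.
  have -> : herm (h A) = herm A.
    rewrite /herm /h !adjmM adjmK mulmxA; apply/eqP/eqP => [|->] //.
    by move/(congr1 (fun X => invmx Pm *m X *m invmx (adjm Pm)));
     rewrite !mulmxA !mulVmx // !mul1mx -!mulmxA !mulmxV // !mulmx1.
  by rewrite /h rank_unitr // rank_unitl.
move=> _; congr (chi _).
by rewrite /h !mulmxA mxtrace_mulC !mulmxA.
Qed.

Definition blk m (c : F) (B : 'M[F]_m) : 'M[F]_(1 + m) := block_mx c%:M 0 0 B.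
Definition Umx m (d : F) (x : 'M[F]_(m, 1)) : 'M[F]_(1 + m) :=
  block_mx 1%:M (d^-1 *: adjm x) 0 1%:M.

Lemma adjm_Umx m d (x : 'M[F]_(m, 1)) : inFq d ->
  adjm (Umx d x) = block_mx 1%:M 0 (d^-1 *: x) 1%:M.
Proof.
by move=> /eqP hd; rewrite /Umx adjm_block !adjm1 adjm0 adjmZ adjmK cjVr hd.
Qed.

Lemma Umx_inv m d (x : 'M[F]_(m, 1)) : Umx d x *m Umx d (- x) = 1%:M.
Proof.
rewrite /Umx mulmx_block !mul1mx !mulmx1 !mul0mx !addr0 add0r adjmN scalerN addNr.
by rewrite mulmx0 addr0 -scalar_mx_block.
Qed.

Lemma Umx_unit m d (x : 'M[F]_(m, 1)) : Umx d x \in unitmx.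
Proof. by case: (mulmx1_unit (Umx_inv d x)). Qed.

Lemma schur m d (x : 'M[F]_(m, 1)) (M : 'M[F]_m) : inFq d -> d != 0 ->
  adjm (Umx d x) *m blk d M *m Umx d x =
  block_mx d%:M (adjm x) x (M + d^-1 *: (x *m adjm x)).
Proof.
move=> hd d0; rewrite adjm_Umx // /blk /Umx !mulmx_block.
rewrite !mul1mx !mulmx1 !mul0mx !mulmx0 !addr0 !add0r.
rewrite !mul_scalar_mx mul_mx_scalar scalerA mulfV // scale1r.
by rewrite !scalerA mulfV // !scale1r scalemxAr addrC.
Qed.

Lemma tr11 (A : 'M[F]_1) : \tr A = A 0 0.
Proof. by rewrite /mxtrace big_ord1. Qed.

Lemma herm_diag m (A : 'M[F]_m) i : herm A -> inFq (A i i).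
Proof. by move=> /eqP hA; rewrite /inFq -{1}hA adjmE cjK. Qed.

Lemma herm_sub m (A : 'M[F]_(1 + m)) : herm A ->
  [/\ herm (ulsubmx A), adjm (dlsubmx A) = ursubmx A & herm (drsubmx A)].
Proof. by rewrite -{1}[A]submxK herm_block => /and3P [h1 /eqP h2 h3]. Qed.

Definition form m (B : 'M[F]_m) (x : 'M[F]_(m, 1)) : F := (adjm x *m B *m x) 0 0.
Definition G m (B : 'M[F]_m) (s : F) : algC := \sum_(x : 'M[F]_(m, 1)) chi (s * form B x).

Lemma form_Fq m (B : 'M[F]_m) x : herm B -> inFq (form B x).
Proof. by move=> hB; apply: herm_diag; apply: herm_adjm_conj. Qed.

Lemma trace_blk m (A : 'M[F]_(1 + m)) c (B1 : 'M[F]_m) :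
  \tr (A *m blk c B1) = ulsubmx A 0 0 * c + \tr (drsubmx A *m B1).
Proof.
rewrite -{1}[A]submxK /blk mulmx_block mxtrace_block !mulmx0 !addr0 add0r.
by rewrite tr11 mul_mx_scalar mxE mulrC.
Qed.

Definition W m (P : pred nat) (B1 : 'M[F]_m) (d : F) : algC :=
  \sum_(A : 'M[F]_(1 + m) | (herm A && P (\rank A)) && (ulsubmx A 0 0 == d))
     chi (\tr (drsubmx A *m B1)).

Lemma QP_split m P c (B1 : 'M[F]_m) : inFq c -> herm B1 ->
  QP P (blk c B1) = \sum_(d : F) chi (c * d) * W P B1 d.
Proof.
move=> hc hB; rewrite QPE (partition_big (fun A => ulsubmx A 0 0) predT) //.
apply: eq_bigr => d _; rewrite mulr_sumr; apply: eq_bigr => A /andP [/andP [hA _] /eqP hd].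
have [hul _ hdr] := herm_sub hA.
rewrite trace_blk chiDF ?hd ?(mulrC d) //; last by apply: tr_Fq.
by rewrite -hd; apply: inFqM => //; apply: herm_diag.
Qed.

Lemma W_nonFq m P (B1 : 'M[F]_m) d : ~~ inFq d -> W P B1 d = 0.
Proof.
move=> hd; rewrite /W big_pred0 // => A; apply/negbTE; apply/andP => [[/andP [hA _] /eqP hdA]].
have [hul _ _] := herm_sub hA.
by move: hd; rewrite -hdA herm_diag.
Qed.

Lemma W_val m P (B1 : 'M[F]_m) d : inFq d -> d != 0 -> herm B1 ->
  W P B1 d = G B1 d^-1 * QP (fun r => P r.+1) B1.
Proof.
move=> hd d0 hB.
pose S (p : 'M[F]_(m, 1) * 'M[F]_m) : 'M[F]_(1 + m) :=
  block_mx d%:M (adjm p.1) p.1 (p.2 + d^-1 *: (p.1 *m adjm p.1)).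
pose T (A : 'M[F]_(1 + m)) := (dlsubmx A, drsubmx A - d^-1 *: (dlsubmx A *m adjm (dlsubmx A))).
rewrite /W (reindex_onto S T); last first.
  move=> A /andP [/andP [hA _] /eqP hdA].
  have [_ hur _] := herm_sub hA.
  rewrite /S /T /= subrK hur -hdA -mx11_scalar; exact: submxK.
have hS : forall x M, S (x, M) = adjm (Umx d x) *m blk d M *m Umx d x.
  by move=> x M; rewrite schur.
rewrite QPE mulr_suml.
rewrite (eq_big (fun p => predT p.1 && (herm p.2 && P (\rank p.2).+1))
   (fun p => chi (d^-1 * form B1 p.1) * chi (\tr (p.2 *m B1)))); first last.
- case=> x M /andP [/andP [/andP [hSh _] _] _].
  rewrite /S /= block_mxKdr mulrC.
  have hM : herm M.
    move: hSh; rewrite herm_block => /and3P [_ _ h].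
    have := hermD h (hermN (hermZ (inFqV hd) (herm_xx x))).
    by rewrite addrK.
  rewrite mulmxDl mxtraceD chiDF ?tr_Fq //; last first.
    by apply: hermZ; [apply: inFqV | apply: herm_xx].
  by rewrite -scalemxAl mxtraceZ -mulmxA [\tr (x *m _)]mxtrace_mulC tr11.
- case=> x M /=.
  have hrk : \rank (S (x, M)) = (\rank M).+1.
    by rewrite hS rank_cong ?Umx_unit // rank_diag_block_mx rank_scalar1 d0.
  rewrite hrk /S block_mxKul mxE eqxx mulr1n eqxx andbT.
  rewrite /T block_mxKdl block_mxKdr addrK eqxx andbT.
  rewrite herm_block eqxx herm_scalar //=.
  have -> : herm (M + d^-1 *: (x *m adjm x)) = herm M; last by [].
  apply/idP/idP => h; last by rewrite hermD // hermZ ?inFqV // herm_xx.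
  have := hermD h (hermN (hermZ (inFqV hd) (herm_xx x))).
  by rewrite addrK.
rewrite -(pair_big_dep predT (fun _ M => herm M && P (\rank M).+1)
  (fun x M => chi (d^-1 * form B1 x) * chi (\tr (M *m B1)))) /=.
rewrite /G; apply: eq_bigr => x _; rewrite -mulr_sumr //.
Qed.

Lemma QP_step m P c (B1 : 'M[F]_m) g : inFq c -> c != 0 -> herm B1 ->
  (forall s, inFq s -> s != 0 -> G B1 s = g) ->
  QP P (blk c B1) = QP P (blk 0 B1) - q%:R * g * QP (fun r => P r.+1) B1.
Proof.
move=> hc c0 hB hG.
set Q' := QP (fun r => P r.+1) B1.
have gen : forall c', inFq c' -> QP P (blk c' B1) =
    W P B1 0 + \sum_(d | inFq d && (d != 0)) chi (c' * d) * (g * Q').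
  move=> c' hc'; rewrite QP_split // (bigD1 0) //= mulr0 chi0 mul1r; congr (_ + _).
  rewrite (bigID inFq) /= [X in _ + X]big1 ?addr0; last first.
    by move=> d /andP [_ hd]; rewrite W_nonFq ?mulr0.
  apply: eq_big => [d|d /andP [d0 hd]]; first by rewrite andbC.
  by rewrite W_val // hG // ?inFqV // invr_eq0.
rewrite !gen ?inFq0 // -!mulr_suml chi_sumM1 //.
rewrite (eq_bigr (fun _ => 1)); last by move=> d _; rewrite mul0r chi0.
rewrite sum_Fq_nz1.
have hq1 : (q%:R : algC) = (q.-1)%:R + 1 by rewrite natr1 prednK // ltnW.
rewrite hq1; ring.
Qed.

Lemma G_cong m (B Pm : 'M[F]_m) s : Pm \in unitmx ->
  G (adjm Pm *m B *m Pm) s = G B s.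
Proof.
move=> hP; rewrite /G.
have hinj : injective (fun x : 'M[F]_(m, 1) => Pm *m x).
  by move=> x y /(congr1 (mulmx (invmx Pm))); rewrite !mulKmx.
rewrite [RHS](reindex_inj hinj) /=; apply: eq_bigr => x _.
by rewrite /form adjmM !mulmxA.
Qed.

Lemma adjm11 (z : 'M[F]_1) : adjm z = (cj (z 0 0))%:M.
Proof. by rewrite {1}[z]mx11_scalar adjm_scalar. Qed.

Lemma form_blk m c (B1 : 'M[F]_m) (a : F) (y : 'M[F]_(m, 1)) :
  form (blk c B1) (col_mx a%:M y) = c * nrm a + form B1 y.
Proof.
rewrite /form /blk adjm_col mul_row_block mul_row_col !mulmx0 addr0 add0r mxE.
by rewrite adjm_scalar mul_scalar_mx mul_mx_scalar scalerA !mxE eqxx mulr1n nrmE; ring.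
Qed.

Lemma G_blk m c (B1 : 'M[F]_m) s : inFq c -> c != 0 -> herm B1 -> inFq s -> s != 0 ->
  G (blk c B1) s = - q%:R * G B1 s.
Proof.
move=> hc c0 hB hs s0; rewrite /G.
pose h (p : F * 'M[F]_(m, 1)) : 'M[F]_(1 + m, 1) := col_mx p.1%:M p.2.
pose h' (x : 'M[F]_(1 + m, 1)) := (usubmx x 0 0, dsubmx x).
have hK : cancel h h'.
  by case=> a y; rewrite /h /h' col_mxKu col_mxKd mxE eqxx mulr1n.
have hK' : cancel h' h.
  by move=> x; rewrite /h /h' /= -mx11_scalar vsubmxK.
rewrite (reindex h) /=; last by exists h' => x _; [apply: hK | apply: hK'].
rewrite -(pair_bigA _ (fun a y => chi (s * form (blk c B1) (h (a, y))))) /=.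
rewrite -(gauss1 (e := s * c)); last by rewrite mulf_neq0.
  2: by apply: inFqM.
rewrite mulr_suml; apply: eq_bigr => a _; rewrite mulr_sumr; apply: eq_bigr => y _.
rewrite /h form_blk mulrDr chiDF ?mulrA //.
  by apply: inFqM; [apply: inFqM | apply: nrm_Fq].
by apply: inFqM => //; apply: form_Fq.
Qed.

Lemma entryD a b (A B : 'M[F]_(a, b)) i j : (A + B) i j = A i j + B i j.
Proof. by rewrite mxE. Qed.
Lemma entryZ a b k (A : 'M[F]_(a, b)) i j : (k *: A) i j = k * A i j.
Proof. by rewrite mxE. Qed.

Lemma adjm_delta n (i : 'I_n) : adjm (delta_mx i 0 : 'M[F]_(n, 1)) = delta_mx 0 i.
Proof.
apply/matrixP => a b; rewrite !mxE.
by case: (a == 0); case: (b == i); rewrite /= ?cj1 ?cj0.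
Qed.

Lemma form_delta n (B : 'M[F]_n) i j :
  (adjm (delta_mx i 0 : 'M[F]_(n, 1)) *m B *m (delta_mx j 0 : 'M[F]_(n, 1))) 0 0 = B i j.
Proof. by rewrite adjm_delta -rowE -colE !mxE. Qed.

Lemma exists_nontrace : exists mu : F, mu + cj mu != 0.
Proof.
case: (boolP [exists mu : F, mu + cj mu != 0]) => [/existsP //|/existsPn h].
have sz : size ('X^q + 'X : {poly F}) = q.+1.
  by rewrite size_addl ?size_polyXn // size_polyX.
have nz : ('X^q + 'X : {poly F}) != 0 by rewrite -size_poly_gt0 sz.
have := card_roots_lt nz; rewrite sz ltnS.
have -> : #|[pred x | root ('X^q + 'X : {poly F}) x]| = #|F|.
  apply: eq_card => x; rewrite !inE /root !hornerE addrC.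
  by have := h x; rewrite negbK.
rewrite cardF => hq.
have : (q * q <= q * 1)%N by rewrite muln1 mulnn.
by rewrite leq_mul2l leqNgt q_gt1 orbF; case: (q) q_gt1.
Qed.

Lemma exists_form_nz n (B : 'M[F]_n) : herm B -> B != 0 -> exists w, form B w != 0.
Proof.
move=> hB B0.
case: (boolP [exists w, form B w != 0]) => [/existsP //|/existsPn h].
have h0 : forall w, form B w = 0 by move=> w; apply/eqP; have := h w; rewrite negbK.
have [mu hmu] := exists_nontrace.
case/negP: B0; apply/eqP/matrixP => i j; rewrite mxE.
apply/eqP; apply/negPn/negP => b0.
pose lam := mu / B i j.
have := h0 ((delta_mx i 0 : 'M[F]_(n, 1)) + lam *: delta_mx j 0).
rewrite /form adjmD adjmZ !mulmxDl !mulmxDr -!scalemxAl -!scalemxAr.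
rewrite !entryD !entryZ !form_delta.
have := h0 (delta_mx i 0 : 'M[F]_(n, 1)); rewrite /form form_delta => ->.
have := h0 (delta_mx j 0 : 'M[F]_(n, 1)); rewrite /form form_delta => ->.
move/eqP: hB => hB.
have -> : B j i = cj (B i j) by rewrite -{1}hB adjmE.
rewrite !mulr0 addr0 add0r => /eqP.
rewrite -cjMr /lam mulfVK // => /eqP h1; move: hmu; by rewrite h1 eqxx.
Qed.

Lemma form_scale n (B : 'M[F]_n) a y : form B (a *: y) = cj a * a * form B y.
Proof.
by rewrite /form adjmZ -!scalemxAl -scalemxAr !entryZ mulrA.
Qed.

Lemma pid1_delta m : (pid_mx 1 : 'M[F]_(1, 1 + m)) = delta_mx 0 0.
Proof.
apply/matrixP => i j; rewrite !mxE (ord1 i) /=.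
by case: j => [[|j] hj].
Qed.

Lemma decomp m (B : 'M[F]_(1 + m)) : herm B -> B != 0 ->
  exists Pm c B1, [/\ Pm \in unitmx, inFq c, c != 0, herm B1 &
                      adjm Pm *m B *m Pm = blk c B1].
Proof.
move=> hB B0.
have [w hw] := exists_form_nz hB B0.
have [P1 [hP1 hc0]] : exists P1, P1 \in unitmx /\ (adjm P1 *m B *m P1) 0 0 != 0.
  have w0 : w != 0.
    by apply/eqP => w0; move: hw; rewrite w0 /form adjm0 !mul0mx mxE eqxx.
  have rv : \rank w^T = 1%N by rewrite rank_rV; case: eqP => // /eqP; rewrite trmx_eq0 (negPf w0).
  have ev := mulmx_ebase w^T; rewrite rv pid1_delta in ev.
  set E := col_ebase w^T in ev; set R := row_ebase w^T in ev.
  exists R^T; split; first by rewrite unitmx_tr row_ebase_unit.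
  have ew : w = E 0 0 *: (R^T *m delta_mx 0 0).
    rewrite -[w]trmxK -ev [E]mx11_scalar mul_scalar_mx -scalemxAl linearZ /=.
    by rewrite trmx_mul trmx_delta [X in _ = X *: _]mxE eqxx mulr1n.
  have key : form B (R^T *m delta_mx 0 0) = (adjm R^T *m B *m R^T) 0 0.
    by rewrite -(form_delta (adjm R^T *m B *m R^T) 0 0) /form adjmM !mulmxA.
  move: hw; rewrite ew form_scale key.
  by apply: contra => /eqP ->; rewrite mulr0.
set B' := adjm P1 *m B *m P1 in hc0.
have hB' : herm B' by apply: herm_adjm_conj.
have [hul hur hdr] := herm_sub hB'.
have l0 : lshift m (0 : 'I_1) = (0 : 'I_(1 + m)) by apply: val_inj.
set c := ulsubmx B' 0 0.
have ec : c = B' 0 0 by rewrite /c !mxE l0.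
set x := dlsubmx B'.
set M := drsubmx B' - c^-1 *: (x *m adjm x).
have hc : inFq c by apply: herm_diag.
have c0 : c != 0 by rewrite ec.
have eB' : B' = adjm (Umx c x) *m blk c M *m Umx c x.
  have eul : ulsubmx B' = c%:M by rewrite [LHS]mx11_scalar.
  by rewrite schur // /M subrK hur -eul /x submxK.
exists (P1 *m Umx c (- x)), c, M; split => //.
- by rewrite unitmx_mul hP1 Umx_unit.
- by rewrite /M hermD // hermN // hermZ ?inFqV // herm_xx.
have -> : adjm (P1 *m Umx c (- x)) *m B *m (P1 *m Umx c (- x)) =
  adjm (Umx c (- x)) *m B' *m Umx c (- x) by rewrite /B' adjmM !mulmxA.
by rewrite eB' !mulmxA -adjmM Umx_inv adjm1 mul1mx -mulmxA Umx_inv mulmx1.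
Qed.

Lemma G_zero m s : G (0 : 'M[F]_m) s = (q%:R) ^+ (2 * m).
Proof.
rewrite /G (eq_bigr (fun _ => 1)); last first.
  by move=> x _; rewrite /form mulmx0 mul0mx mxE mulr0 chi0.
rewrite sumr_const card_mx cardF muln1 -expnM natrX.
by rewrite mulnC.
Qed.

Lemma rank_blk m c (B1 : 'M[F]_m) : \rank (blk c B1) = ((c != 0%R) + \rank B1)%N.
Proof. by rewrite /blk rank_diag_block_mx rank_scalar1. Qed.

Lemma herm_blk m c (B1 : 'M[F]_m) : inFq c -> herm B1 -> herm (blk c B1).
Proof. by move=> hc hB; rewrite /blk herm_block herm_scalar // hB adjm0 eqxx. Qed.

Lemma G_val m (B : 'M[F]_m) s : herm B -> inFq s -> s != 0 ->
  G B s = (q%:R) ^+ (2 * (m - \rank B)) * (- q%:R) ^+ (\rank B).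
Proof.
elim: m B => [|m IH] B hB hs s0.
  by rewrite [B]flatmx0 G_zero mxrank0 mulr1.
case: (eqVneq B 0) => [->|B0]; first by rewrite G_zero mxrank0 mulr1 subn0.
have [Pm [c [B1 [hP hc c0 hB1 eB]]]] := decomp hB B0.
have rB : \rank B = (\rank B1).+1.
  by rewrite -(rank_cong B hP) eB rank_blk c0.
rewrite -(G_cong B s hP) eB G_blk // IH // rB subSS exprS.
by rewrite mulrA mulrA [_ * (- _)]mulrC -mulrA.
Qed.

Lemma QP_rank m : forall P (B B' : 'M[F]_m), herm B -> herm B' ->
  \rank B = \rank B' -> QP P B = QP P B'.
Proof.
elim: m => [|m IH] P B B' hB hB' rBB'.
  by rewrite [B]flatmx0 [B']flatmx0.
suff H : forall r P (B B' : 'M[F]_(1 + m)), \rank B = r -> herm B -> herm B' ->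
    \rank B' = r -> QP P B = QP P B'.
  exact: (H _ P B B' rBB' hB hB').
clear P B B' hB hB' rBB'.
elim=> [|r IHr] P B B' rB hB hB' rB'.
  by move/eqP: rB; rewrite mxrank_eq0 => /eqP ->; move/eqP: rB'; rewrite mxrank_eq0 => /eqP ->.
have B0 : B != 0 by apply/eqP => e; move: rB; rewrite e mxrank0.
have B'0 : B' != 0 by apply/eqP => e; move: rB'; rewrite e mxrank0.
have [Pm [c [B1 [hP hc c0 hB1 eB]]]] := decomp hB B0.
have [Pm' [c' [B1' [hP' hc' c0' hB1' eB']]]] := decomp hB' B'0.
have r1 : \rank B1 = r.
  by move: rB; rewrite -(rank_cong B hP) eB rank_blk c0 => -[].
have r1' : \rank B1' = r.
  by move: rB'; rewrite -(rank_cong B' hP') eB' rank_blk c0' => -[].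
rewrite -(QP_cong P B hP) -(QP_cong P B' hP') eB eB'.
pose g : algC := (q%:R) ^+ (2 * (m - r)) * (- q%:R) ^+ r.
rewrite (@QP_step _ P _ _ g hc c0 hB1); last by move=> s hs s0; rewrite G_val // r1.
rewrite (@QP_step _ P _ _ g hc' c0' hB1'); last by move=> s hs s0; rewrite G_val // r1'.
congr (_ - _ * _).
  apply: IHr; rewrite ?rank_blk ?eqxx ?r1 ?r1' //; by apply: herm_blk; rewrite ?inFq0.
by apply: IH => //; rewrite r1 r1'.
Qed.

Lemma main_in (n i k : nat) (Bi Bi1 : 'M[F]_n) (C : 'M[F]_n.-1) :
  (1 <= n)%N -> (1 <= i <= n)%N -> (1 <= k <= n)%N ->
  herm Bi -> \rank Bi = i -> herm Bi1 -> \rank Bi1 = i.-1 ->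
  herm C -> \rank C = i.-1 ->
  QP (pred1 k) Bi = QP (pred1 k) Bi1 + (- (q%:R : algC)) ^+ (2 * n - i) * QP (pred1 k.-1) C.
Proof.
case: n Bi Bi1 C => // m Bi Bi1 C _ /andP [i1 iN] /andP [k1 kN] hBi rBi hBi1 rBi1 hC rC.
have B0 : Bi != 0 by apply/eqP => e; move: rBi i1; rewrite e mxrank0 => <-.
have [Pm [c [B1 [hP hc c0 hB1 eB]]]] := decomp hBi B0.
have r1 : \rank B1 = i.-1.
  by move: rBi; rewrite -(rank_cong Bi hP) eB rank_blk c0 => <-.
pose g : algC := (q%:R) ^+ (2 * (m - \rank B1)) * (- q%:R) ^+ (\rank B1).
rewrite -(QP_cong _ Bi hP) eB (@QP_step _ _ _ _ g hc c0 hB1); last first.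
  by move=> s hs s0; rewrite G_val.
rewrite (@QP_rank _ _ (blk 0 B1) Bi1); first last.
- by rewrite rank_blk eqxx r1 rBi1.
- by [].
- by apply: herm_blk; rewrite ?inFq0.
have -> : QP (fun r => pred1 k r.+1) B1 = QP (pred1 k.-1) B1.
  apply: eq_bigl => A; congr (_ && _); rewrite /=.
  by case: (k) k1 => // k' _; rewrite eqSS.
rewrite (@QP_rank _ _ B1 C) ?r1 ?rC //.
rewrite /g r1 -mulNr; congr (_ + _ * _).
have -> : (q%:R : algC) ^+ (2 * (m - i.-1)) = (- q%:R) ^+ (2 * (m - i.-1)).
  by rewrite !exprM sqrrN.
rewrite -mulNr mulrA -exprS -exprD; congr (_ ^+ _).
case: (i) i1 iN => // i' _ /=; rewrite ltnS => h; lia.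
Qed.
End Main.

Theorem lemmaA1 (F : finFieldType) (q : nat) (chi : F -> algC) (n i k : nat)
  (Bi : 'M[F]_n) (Bi1 : 'M[F]_n) (C : 'M[F]_n.-1) :
  (exists p e : nat, [/\ prime p, (0 < e)%N & q = (p ^ e)%N]) ->
  #|F| = (q ^ 2)%N ->
  is_Fq_character q chi -> Fq_nontrivial q chi ->
  (1 <= n)%N -> (1 <= i <= n)%N -> (1 <= k <= n)%N ->
  herm_mx q Bi -> \rank Bi = i ->
  herm_mx q Bi1 -> \rank Bi1 = i.-1 ->
  herm_mx q C -> \rank C = i.-1 ->
  Qval q chi k Bi =
    Qval q chi k Bi1 + (- (q%:R : algC)) ^+ (2 * n - i) * Qval q chi k.-1 C.
Proof.
move=> [p [e [pp e0 qe]]] cardF [chi0 chiD] chi_nt.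
have q_gt1 : (1 < q)%N.
  rewrite qe; apply: (leq_trans (prime_gt1 pp)).
  by rewrite -{1}(expn1 p) leq_pexp2l // prime_gt0.
have chp : p \in [char F].
  apply: (card_finPcharP (n := (e * 2)%N)) => //; by rewrite cardF qe expnM.
have cjD : forall x y : F, (x + y) ^+ q = x ^+ q + y ^+ q.
  move=> x y; apply: exprDn_pchar; by rewrite qe pnatX pnatE // chp.
exact: (main_in q_gt1 cardF cjD chi0 chiD chi_nt).
Qed.
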